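(* Let $J\subseteq\mathbb{R}$ be an interval, $f:J\to\mathbb{R}$ convex, and $a,b\in J$. Then $$\int_0^1 f\big(a\nabla_\nu b\big)\,d\nu\le \frac{f(a)+f(b)}{2}-\int_0^1\big(1-|2\nu-1|\big)\left(\int_0^1\left(\frac{f\big(a\nabla_{\nu\lambda}b\big)+f\big(b\nabla_{(1-\nu)\lambda}a\big)}{2}-f\Big(a\nabla_{\frac{1+\lambda(2\nu-1)}{2}}b\Big)\right)d\lambda\right)d\nu .$$
   Context: For real $x,y$ and $\mu\in[0,1]$, $x\nabla_\mu y:=(1-\mu)x+\mu y$. *)

(* Defs.v *)
From Stdlib Require Import Reals.
From Coquelicot Require Import Coquelicot.
Open Scope R_scope.

Definition nabla (x mu y : R) : R := (1 - mu) * x + mu * y.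

Definition is_interval (J : R -> Prop) : Prop :=
  forall x y z, J x -> J z -> x <= y <= z -> J y.

Definition convex_on (J : R -> Prop) (f : R -> R) : Prop :=
  forall x y t, J x -> J y -> 0 <= t <= 1 ->
    f ((1 - t) * x + t * y) <= (1 - t) * f x + t * f y.

(* Main.v *)
Require Import Defs.
From Stdlib Require Import Reals.
From Coquelicot Require Import Coquelicot.
From Stdlib Require Import Lra Psatz Classical.
Open Scope R_scope.

Definition conv3 (phi : R -> R) : Prop :=
  forall u p v, 0 <= u -> u <= p -> p <= v -> v <= 1 ->
    (v - u) * phi p <= (v - p) * phi u + (p - u) * phi v.

Lemma nabla_in (J : R -> Prop) a b s :
  is_interval J -> J a -> J b -> 0 <= s <= 1 -> J (nabla a s b).
Proof.
  intros HI Ha Hb Hs. unfold nabla.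
  destruct (Rle_dec a b) as [Hab|Hab].
  - apply (HI a _ b Ha Hb). split; nra.
  - apply (HI b _ a Hb Ha). split; nra.
Qed.

Lemma conv3_of_convex J f a b :
  is_interval J -> convex_on J f -> J a -> J b -> conv3 (fun t => f (nabla a t b)).
Proof.
  intros HI Hc Ha Hb u p v H0u Hup Hpv Hv1.
  destruct (Req_dec u v) as [E|E].
  - subst v. assert (p = u) by lra. subst p. lra.
  - set (t := (p - u) / (v - u)).
    assert (Hvu : 0 < v - u) by lra.
    assert (Ht : 0 <= t <= 1).
    { unfold t; split.
      - apply Rdiv_le_0_compat; lra.
      - apply Rmult_le_reg_r with (v - u); [lra|].
        unfold Rdiv; rewrite Rmult_assoc, Rinv_l by lra; lra. }
    assert (Eq : nabla a p b = (1 - t) * nabla a u b + t * nabla a v b).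
    { unfold nabla, t. field. lra. }
    pose proof (Hc (nabla a u b) (nabla a v b) t
       (nabla_in J a b u HI Ha Hb ltac:(lra)) (nabla_in J a b v HI Ha Hb ltac:(lra)) Ht) as C.
    rewrite <- Eq in C.
    assert (E1 : (v - u) * (1 - t) = v - p) by (unfold t; field; lra).
    assert (E2 : (v - u) * t = p - u) by (unfold t; field; lra).
    apply Rmult_le_compat_l with (r := v - u) in C; [|lra].
    rewrite Rmult_plus_distr_l, <- !Rmult_assoc, E1, E2 in C. exact C.
Qed.

Lemma conv3_flip phi : conv3 phi -> conv3 (fun t => phi (1 - t)).
Proof.
  intros H u p v H0 H1 H2 H3.
  pose proof (H (1 - v) (1 - p) (1 - u) ltac:(lra) ltac:(lra) ltac:(lra) ltac:(lra)).
  lra.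
Qed.

Lemma pointwise_half phi nu lam :
  conv3 phi -> 0 <= nu <= 1/2 -> 0 <= lam <= 1 ->
  phi nu + (1 - Rabs (2 * nu - 1)) *
     ((phi (nu * lam) + phi (1 - (1 - nu) * lam)) / 2 - phi ((1 + lam * (2 * nu - 1)) / 2))
  <= (1 - nu) * phi 0 + nu * phi 1.
Proof.
  intros H Hn Hl.
  rewrite Rabs_left1 by lra.
  set (x := nu * lam). set (y := 1 - (1 - nu) * lam). set (m := (1 + lam * (2 * nu - 1)) / 2).
  destruct (Req_dec nu 0) as [E|E].
  - subst nu. unfold x. rewrite Rmult_0_l. lra.
  - assert (Hx : 0 <= x) by (unfold x; nra).
    assert (Hxm : x <= m) by (unfold x, m; nra).
    assert (Hmy : m <= y) by (unfold y, m; nra).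
    assert (Hy1 : y <= 1) by (unfold y; nra).
    assert (Hnm : nu <= m) by (unfold m; nra).
    assert (Hm1 : m < 1) by (unfold m; nra).
    assert (Hm0 : 0 < m) by lra.
    pose proof (H 0 x m ltac:(lra) Hx Hxm ltac:(lra)) as e1.
    pose proof (H m y 1 ltac:(lra) Hmy Hy1 ltac:(lra)) as e2.
    pose proof (H 0 nu m ltac:(lra) ltac:(lra) Hnm ltac:(lra)) as e3.
    pose proof (H 0 m 1 ltac:(lra) ltac:(lra) ltac:(lra) ltac:(lra)) as e4.
    apply Rmult_le_compat_l with (r := nu * (1 - m)) in e1; [|nra].
    apply Rmult_le_compat_l with (r := nu * m) in e2; [|nra].
    apply Rmult_le_compat_l with (r := 1 - m) in e3; [|nra].
    apply Rmult_le_compat_l with (r := nu * (1 - y)) in e4; [|nra].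
    assert (Hpos : 0 < m * (1 - m)) by nra.
    apply Rmult_le_reg_l with (m * (1 - m)); [exact Hpos|].
    assert (Ey : y = 1 - (1 - nu) * lam) by reflexivity.
    assert (Ex : x = nu * lam) by reflexivity.
    assert (Em : m = (1 + lam * (2 * nu - 1)) / 2) by reflexivity.
    clearbody x y m. subst x y. 
    rewrite Em in *. lra.
Qed.

Lemma pointwise phi nu lam :
  conv3 phi -> 0 <= nu <= 1 -> 0 <= lam <= 1 ->
  phi nu + (1 - Rabs (2 * nu - 1)) *
     ((phi (nu * lam) + phi (1 - (1 - nu) * lam)) / 2 - phi ((1 + lam * (2 * nu - 1)) / 2))
  <= (1 - nu) * phi 0 + nu * phi 1.
Proof.
  intros H Hn Hl.
  destruct (Rle_dec nu (1/2)).
  - apply pointwise_half; auto; lra.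
  - pose proof (pointwise_half _ (1 - nu) lam (conv3_flip _ H) ltac:(lra) Hl) as P.
    simpl in P.
    replace (1 - (1 - nu)) with nu in P by ring.
    replace (1 - 0) with 1 in P by ring.
    replace (1 - 1) with 0 in P by ring.
    replace (1 - (1 - nu) * lam) with (1 - (1 - nu) * lam) in P by ring.
    replace (1 - (1 - (1 - nu)) * lam) with (1 - nu * lam) in P by ring.
    replace (1 - (1 - nu * lam)) with (nu * lam) in P by ring.
    replace (1 - (1 + lam * (2 * (1 - nu) - 1)) / 2) with ((1 + lam * (2 * nu - 1)) / 2) in P by field.
    replace (2 * (1 - nu) - 1) with (- (2 * nu - 1)) in P by ring.
    rewrite Rabs_Ropp in P. lra.
Qed.

Lemma div_le a b c d : 0 < b -> 0 < d -> a * d <= c * b -> a / b <= c / d.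
Proof.
  intros Hb Hd H. apply Rmult_le_reg_r with (b * d); [nra|].
  replace (a / b * (b * d)) with (a * d) by (field; lra).
  replace (c / d * (b * d)) with (c * b) by (field; lra). lra.
Qed.

Lemma lim0 phi : conv3 phi ->
  exists c, forall eps, 0 < eps -> exists del, 0 < del /\
    forall t, 0 < t < del -> Rabs (phi t - c) < eps.
Proof.
  intros H.
  set (s := fun t => (phi (1/2) - phi t) / (1/2 - t)).
  assert (Hs : forall t, t < 1/2 -> phi t = phi (1/2) - (1/2 - t) * s t).
  { intros t Ht. unfold s. field. lra. }
  assert (Hmono : forall t1 t2, 0 < t1 -> t1 <= t2 -> t2 < 1/2 -> s t1 <= s t2).
  { intros t1 t2 H1 H2 H3. unfold s. apply div_le; try lra.
    pose proof (H t1 t2 (1/2) ltac:(lra) H2 ltac:(lra) ltac:(lra)). nra. }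
  assert (Hlow : forall t, 0 < t < 1/2 -> 2 * (phi (1/2) - phi 0) <= s t).
  { intros t Ht. unfold s.
    replace (2 * (phi (1/2) - phi 0)) with (2 * (phi (1/2) - phi 0) / 1) by field.
    apply div_le; try lra.
    pose proof (H 0 t (1/2) ltac:(lra) ltac:(lra) ltac:(lra) ltac:(lra)). nra. }
  set (E := fun y => exists t, 0 < t < 1/2 /\ y = - s t).
  assert (HB : bound E).
  { exists (- (2 * (phi (1/2) - phi 0))). intros y [t [Ht ->]].
    pose proof (Hlow t Ht). lra. }
  assert (HE : exists y, E y) by (exists (- s (1/4)); exists (1/4); split; [lra|reflexivity]).
  destruct (completeness E HB HE) as [T [HTub HTl]].
  exists (phi (1/2) + T / 2).
  intros eps Heps.
  assert (Ht0 : exists t0, 0 < t0 < 1/2 /\ T - eps < - s t0).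
  { apply NNPP. intro N.
    assert (T <= T - eps); [|lra].
    apply HTl. intros y [t [Ht ->]].
    apply Rnot_lt_le. intro L. apply N. exists t. split; auto. }
  destruct Ht0 as [t0 [Ht0 Ht0']].
  set (K := Rabs T + eps + 1).
  assert (HK : 0 < K) by (unfold K; pose proof (Rabs_pos T); lra).
  exists (Rmin t0 (eps / (2 * K))). split.
  { apply Rmin_pos; [lra|]. apply Rdiv_lt_0_compat; lra. }
  intros t [Ht1 Ht2].
  assert (Htt0 : t < t0) by (eapply Rlt_le_trans; [exact Ht2|apply Rmin_l]).
  assert (HtK : t < eps / (2 * K)) by (eapply Rlt_le_trans; [exact Ht2|apply Rmin_r]).
  assert (Hst : s t <= s t0) by (apply Hmono; lra).
  assert (HsT : - s t <= T) by (apply HTub; exists t; split; [lra|reflexivity]).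
  assert (Hb1 : Rabs (s t + T) < eps) by (apply Rabs_def1; lra).
  assert (Hb2 : Rabs (s t) <= K).
  { unfold K. apply Rabs_le. pose proof (Rabs_pos T). split.
    - pose proof (Rle_abs T). lra.
    - pose proof (Rle_abs (-T)). rewrite Rabs_Ropp in H1. lra. }
  rewrite (Hs t) by lra.
  replace (phi (1 / 2) - (1 / 2 - t) * s t - (phi (1 / 2) + T / 2)) with (- (1/2) * (s t + T) + t * s t) by field.


  eapply Rle_lt_trans; [apply Rabs_triang|].
  rewrite !Rabs_mult, Rabs_Ropp, (Rabs_pos_eq (1/2)) by lra.
  rewrite (Rabs_pos_eq t) by lra.
  assert (t * Rabs (s t) <= t * K) by (apply Rmult_le_compat_l; lra).
  assert (t * K < eps / 2).
  { apply Rmult_lt_reg_r with (/ K). apply Rinv_0_lt_compat; lra.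
    replace (t * K * / K) with t by (field; lra).
    replace (eps / 2 * / K) with (eps / (2 * K)) by (field; lra). exact HtK. }
  lra.
Qed.

Lemma cont_in phi : conv3 phi -> forall p, 0 < p < 1 ->
  forall eps, 0 < eps -> exists del, 0 < del /\
    forall t, Rabs (t - p) < del -> Rabs (phi t - phi p) < eps.
Proof.
  intros H p Hp eps Heps.
  set (C := Rabs (phi 1 - phi p) / (1 - p) + Rabs (phi p - phi 0) / p + 1).
  assert (HC : 0 < C).
  { unfold C. assert (0 <= Rabs (phi 1 - phi p) / (1 - p)) by (apply Rdiv_le_0_compat; [apply Rabs_pos|lra]).
    assert (0 <= Rabs (phi p - phi 0) / p) by (apply Rdiv_le_0_compat; [apply Rabs_pos|lra]). lra. }
  exists (Rmin (Rmin p (1 - p)) (eps / C)). split.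
  { repeat apply Rmin_pos; try lra. apply Rdiv_lt_0_compat; lra. }
  intros t Ht.
  assert (Hd1 : Rabs (t - p) < Rmin p (1 - p)) by (eapply Rlt_le_trans; [exact Ht|apply Rmin_l]).
  assert (Hd2 : Rabs (t - p) < eps / C) by (eapply Rlt_le_trans; [exact Ht|apply Rmin_r]).
  assert (Ha1 : Rabs (t - p) < p) by (eapply Rlt_le_trans; [exact Hd1|apply Rmin_l]).
  assert (Ha2 : Rabs (t - p) < 1 - p) by (eapply Rlt_le_trans; [exact Hd1|apply Rmin_r]).
  assert (Hmain : Rabs (phi t - phi p) <= C * Rabs (t - p)).
  { set (A1 := Rabs (phi 1 - phi p) / (1 - p)).
    set (A0 := Rabs (phi p - phi 0) / p).
    assert (EA1 : A1 * (1 - p) = Rabs (phi 1 - phi p)) by (unfold A1; field; lra).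
    assert (EA0 : A0 * p = Rabs (phi p - phi 0)) by (unfold A0; field; lra).
    pose proof (Rle_abs (phi 1 - phi p)). pose proof (Rle_abs (- (phi 1 - phi p))).
    pose proof (Rle_abs (phi p - phi 0)). pose proof (Rle_abs (- (phi p - phi 0))).
    rewrite Rabs_Ropp in *.
    assert (0 <= A1) by (unfold A1; apply Rdiv_le_0_compat; [apply Rabs_pos|lra]).
    assert (0 <= A0) by (unfold A0; apply Rdiv_le_0_compat; [apply Rabs_pos|lra]).
    unfold C; fold A1 A0.
    destruct (Rle_dec p t) as [Hpt|Hpt].
    - rewrite (Rabs_pos_eq (t - p)) by lra.
      rewrite (Rabs_pos_eq (t - p)) in Ha2 by lra.
      pose proof (H p t 1 ltac:(lra) Hpt ltac:(lra) ltac:(lra)) as U.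
      pose proof (H 0 p t ltac:(lra) ltac:(lra) Hpt ltac:(lra)) as L.
      apply Rabs_le. split.
      + apply Rmult_le_reg_l with p; [lra|].
        assert (0 <= (t - p) * (A0 * p + (phi p - phi 0))) by (apply Rmult_le_pos; lra).
        assert (0 <= p * (t - p) * (A1 + 1)) by (apply Rmult_le_pos; [apply Rmult_le_pos|]; lra).
        nra.
      + apply Rmult_le_reg_l with (1 - p); [lra|].
        assert (0 <= (t - p) * (A1 * (1 - p) - (phi 1 - phi p))) by (apply Rmult_le_pos; lra).
        assert (0 <= (1 - p) * (t - p) * (A0 + 1)) by (apply Rmult_le_pos; [apply Rmult_le_pos|]; lra).
        nra.
    - rewrite (Rabs_left (t - p)) by lra.
      rewrite (Rabs_left (t - p)) in Ha1 by lra.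
      pose proof (H 0 t p ltac:(lra) ltac:(lra) ltac:(lra) ltac:(lra)) as U.
      pose proof (H t p 1 ltac:(lra) ltac:(lra) ltac:(lra) ltac:(lra)) as L.
      apply Rabs_le. split.
      + apply Rmult_le_reg_l with (1 - p); [lra|].
        assert (0 <= (p - t) * (A1 * (1 - p) - (phi 1 - phi p))) by (apply Rmult_le_pos; lra).
        assert (0 <= (1 - p) * (p - t) * (A0 + 1)) by (apply Rmult_le_pos; [apply Rmult_le_pos|]; lra).
        nra.
      + apply Rmult_le_reg_l with p; [lra|].
        assert (0 <= (p - t) * (A0 * p - (phi 0 - phi p))) by (apply Rmult_le_pos; lra).
        assert (0 <= p * (p - t) * (A1 + 1)) by (apply Rmult_le_pos; [apply Rmult_le_pos|]; lra).
        nra. }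
  eapply Rle_lt_trans; [exact Hmain|].
  apply Rmult_lt_reg_r with (/ C). apply Rinv_0_lt_compat; lra.
  replace (C * Rabs (t - p) * / C) with (Rabs (t - p)) by (field; lra).
  replace (eps * / C) with (eps / C) by (field; lra). exact Hd2.
Qed.

Definition ext (phi : R -> R) (c0 c1 : R) (t : R) : R :=
  if Rle_dec t 0 then c0 else if Rle_dec 1 t then c1 else phi t.

Lemma ext_le0 phi c0 c1 t : t <= 0 -> ext phi c0 c1 t = c0.
Proof. intros H. unfold ext. destruct (Rle_dec t 0); [reflexivity|lra]. Qed.
Lemma ext_ge1 phi c0 c1 t : 1 <= t -> ext phi c0 c1 t = c1.
Proof. intros H. unfold ext. destruct (Rle_dec t 0); [lra|]. destruct (Rle_dec 1 t); [reflexivity|lra]. Qed.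
Lemma ext_mid phi c0 c1 t : 0 < t < 1 -> ext phi c0 c1 t = phi t.
Proof. intros H. unfold ext. destruct (Rle_dec t 0); [lra|]. destruct (Rle_dec 1 t); [lra|reflexivity]. Qed.

Definition epsdel (h : R -> R) z := forall eps, 0 < eps -> exists del, 0 < del /\
  forall y, Rabs (y - z) < del -> Rabs (h y - h z) < eps.

Lemma epsdel_cont h z : epsdel h z -> continuity_pt h z.
Proof.
  intros H. unfold continuity_pt, continue_in, limit1_in, limit_in. intros eps Heps.
  destruct (H eps Heps) as [d [Hd Hy]].
  exists d; split; auto. intros y [_ Hyz]. simpl in *. unfold R_dist in *. apply Hy; exact Hyz.
Qed.

Lemma ext_epsdel phi c0 c1 :
  conv3 phi ->
  (forall eps, 0 < eps -> exists del, 0 < del /\ forall t, 0 < t < del -> Rabs (phi t - c0) < eps) ->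
  (forall eps, 0 < eps -> exists del, 0 < del /\ forall t, 0 < t < del -> Rabs (phi (1 - t) - c1) < eps) ->
  forall z, epsdel (ext phi c0 c1) z.
Proof.
  intros H H0 H1 z eps Heps.
  destruct (Rlt_le_dec z 0) as [Hz|Hz].
  { exists (- z). split; [lra|]. intros y Hy.
    assert (y < 0) by (apply Rabs_def2 in Hy; lra).
    rewrite !ext_le0 by lra. rewrite Rminus_diag, Rabs_R0. lra. }
  destruct (Req_dec z 0) as [Ez|Ez].
  { subst z. destruct (H0 eps Heps) as [d [Hd Hd']].
    exists (Rmin d 1). split; [apply Rmin_pos; lra|]. intros y Hy.
    rewrite Rminus_0_r in Hy.
    assert (Hy1 : Rabs y < d) by (eapply Rlt_le_trans; [exact Hy|apply Rmin_l]).
    assert (Hy2 : Rabs y < 1) by (eapply Rlt_le_trans; [exact Hy|apply Rmin_r]).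
    apply Rabs_def2 in Hy1. apply Rabs_def2 in Hy2.
    rewrite (ext_le0 _ _ _ 0) by lra.
    destruct (Rle_dec y 0).
    - rewrite ext_le0 by lra. rewrite Rminus_diag, Rabs_R0. lra.
    - rewrite ext_mid by lra. apply Hd'. lra. }
  destruct (Rlt_le_dec z 1) as [Hz1|Hz1].
  { destruct (cont_in phi H z ltac:(lra) eps Heps) as [d [Hd Hd']].
    exists (Rmin d (Rmin z (1 - z))). split.
    { apply Rmin_pos; [lra|apply Rmin_pos; lra]. }
    intros y Hy.
    assert (Hy1 : Rabs (y - z) < d) by (eapply Rlt_le_trans; [exact Hy|apply Rmin_l]).
    assert (Hy2 : Rabs (y - z) < Rmin z (1 - z)) by (eapply Rlt_le_trans; [exact Hy|apply Rmin_r]).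
    assert (Hy3 : Rabs (y - z) < z) by (eapply Rlt_le_trans; [exact Hy2|apply Rmin_l]).
    assert (Hy4 : Rabs (y - z) < 1 - z) by (eapply Rlt_le_trans; [exact Hy2|apply Rmin_r]).
    apply Rabs_def2 in Hy3. apply Rabs_def2 in Hy4.
    rewrite !ext_mid by lra. apply Hd'. exact Hy1. }
  destruct (Req_dec z 1) as [Ez1|Ez1].
  { subst z. destruct (H1 eps Heps) as [d [Hd Hd']].
    exists (Rmin d 1). split; [apply Rmin_pos; lra|]. intros y Hy.
    assert (Hy1 : Rabs (y - 1) < d) by (eapply Rlt_le_trans; [exact Hy|apply Rmin_l]).
    assert (Hy2 : Rabs (y - 1) < 1) by (eapply Rlt_le_trans; [exact Hy|apply Rmin_r]).
    apply Rabs_def2 in Hy1. apply Rabs_def2 in Hy2.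
    rewrite (ext_ge1 _ _ _ 1) by lra.
    destruct (Rle_dec 1 y).
    - rewrite ext_ge1 by lra. rewrite Rminus_diag, Rabs_R0. lra.
    - rewrite ext_mid by lra. replace y with (1 - (1 - y)) by ring. apply Hd'. lra. }
  exists (z - 1). split; [lra|]. intros y Hy.
  assert (1 < y) by (apply Rabs_def2 in Hy; lra).
  rewrite !ext_ge1 by lra. rewrite Rminus_diag, Rabs_R0. lra.
Qed.

Definition uc (h : R -> R) := forall eps, 0 < eps -> exists del, 0 < del /\
  forall x y, Rabs (x - y) < del -> Rabs (h x - h y) < eps.

Definition cl (t : R) := Rmax (-1) (Rmin 2 t).

Lemma cl_prop t : -1 <= cl t <= 2.
Proof. unfold cl, Rmax, Rmin. repeat destruct Rle_dec; lra. Qed.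

Lemma cl_lip x y : Rabs (cl x - cl y) <= Rabs (x - y).
Proof. unfold cl, Rmax, Rmin. repeat destruct Rle_dec; split_Rabs; lra. Qed.

Lemma ext_cl phi c0 c1 t : ext phi c0 c1 (cl t) = ext phi c0 c1 t.
Proof.
  unfold cl, Rmax, Rmin. repeat destruct Rle_dec; try reflexivity;
  try (rewrite !ext_le0 by lra; reflexivity);
  try (rewrite !ext_ge1 by lra; reflexivity); lra.
Qed.

Lemma ext_uc phi c0 c1 : (forall z, epsdel (ext phi c0 c1) z) -> uc (ext phi c0 c1).
Proof.
  intros H eps Heps.
  pose proof (Heine (ext phi c0 c1) (fun c => -1 <= c <= 2) (compact_P3 (-1) 2)
      (fun x _ => epsdel_cont _ _ (H x))) as U.
  destruct (U (mkposreal eps Heps)) as [[d Hd] Hdd]. simpl in Hdd.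
  exists d. split; auto. intros x y Hxy.
  rewrite <- (ext_cl phi c0 c1 x), <- (ext_cl phi c0 c1 y).
  apply Hdd; try apply cl_prop.
  eapply Rle_lt_trans; [apply cl_lip|exact Hxy].
Qed.

Definition Hh (u : R -> R) nu lam :=
  (u (nu * lam) + u (1 - (1 - nu) * lam)) / 2 - u ((1 + lam * (2 * nu - 1)) / 2).

Lemma comb_bound u : uc u -> forall eps, 0 < eps -> exists del, 0 < del /\
  forall a1 a2 a3 b1 b2 b3, Rabs (a1 - b1) < del -> Rabs (a2 - b2) < del -> Rabs (a3 - b3) < del ->
  Rabs (((u a1 + u a2) / 2 - u a3) - ((u b1 + u b2) / 2 - u b3)) < eps.
Proof.
  intros U eps Heps. destruct (U (eps / 2) ltac:(lra)) as [d [Hd Hd']].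
  exists d. split; auto. intros a1 a2 a3 b1 b2 b3 H1 H2 H3.
  pose proof (Hd' _ _ H1) as K1. pose proof (Hd' _ _ H2) as K2. pose proof (Hd' _ _ H3) as K3.
  apply Rabs_def2 in K1. apply Rabs_def2 in K2. apply Rabs_def2 in K3.
  apply Rabs_def1; lra.
Qed.

Lemma small k d del K : Rabs k <= K -> 0 < K -> Rabs d < del / K -> Rabs (k * d) < del.
Proof.
  intros H1 H2 H3. rewrite Rabs_mult.
  assert (Rabs d * K < del).
  { apply Rmult_lt_reg_r with (/ K). apply Rinv_0_lt_compat; lra.
    replace (Rabs d * K * / K) with (Rabs d) by (field; lra). exact H3. }
  pose proof (Rabs_pos d). pose proof (Rabs_pos k). nra.
Qed.

Lemma Hh_cont_l u : uc u -> forall nu l0, continuity_pt (Hh u nu) l0.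
Proof.
  intros U nu l0. apply epsdel_cont. intros eps Heps.
  destruct (comb_bound u U eps Heps) as [d [Hd Hd']].
  set (K := Rabs nu + 1).
  assert (HK : 0 < K) by (unfold K; pose proof (Rabs_pos nu); lra).
  exists (d / K). split; [apply Rdiv_lt_0_compat; lra|].
  intros y Hy. unfold Hh. apply Hd'.
  - replace (nu * y - nu * l0) with (nu * (y - l0)) by ring.
    apply small with K; auto. unfold K; lra.
  - replace (1 - (1 - nu) * y - (1 - (1 - nu) * l0)) with ((nu - 1) * (y - l0)) by ring.
    apply small with K; auto. unfold K. split_Rabs; lra.
  - replace ((1 + y * (2 * nu - 1)) / 2 - (1 + l0 * (2 * nu - 1)) / 2) with ((nu - 1/2) * (y - l0)) by field.
    apply small with K; auto. unfold K. split_Rabs; lra.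
Qed.

Lemma Hh_ex u : uc u -> forall nu a b, ex_RInt (Hh u nu) a b.
Proof.
  intros U nu a b. apply (ex_RInt_continuous (V := R_CompleteNormedModule)). intros z _.
  apply continuity_pt_filterlim. apply Hh_cont_l; auto.
Qed.

Definition Kh u nu := RInt (Hh u nu) 0 1.

Lemma Kh_cont u : uc u -> forall nu0, epsdel (Kh u) nu0.
Proof.
  intros U nu0 eps Heps.
  destruct (comb_bound u U (eps / 2) ltac:(lra)) as [d [Hd Hd']].
  exists d. split; auto. intros nu Hnu. unfold Kh.
  assert (E : RInt (Hh u nu) 0 1 - RInt (Hh u nu0) 0 1 =
              RInt (fun l => Hh u nu l - Hh u nu0 l) 0 1).
  { symmetry. apply (RInt_minus (V := R_CompleteNormedModule)); apply Hh_ex; auto. }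
  rewrite E.
  assert (Hex : ex_RInt (fun l => Hh u nu l - Hh u nu0 l) 0 1).
  { apply (ex_RInt_minus (V := R_NormedModule)); apply Hh_ex; auto. }
  eapply Rle_lt_trans.
  { apply (abs_RInt_le_const _ 0 1 (eps / 2)); [lra|exact Hex|].
    intros t Ht. unfold Hh. left. apply Hd'.
    - replace (nu * t - nu0 * t) with (t * (nu - nu0)) by ring.
      rewrite Rabs_mult, Rabs_pos_eq by lra.
      pose proof (Rabs_pos (nu - nu0)). nra.
    - replace (1 - (1 - nu) * t - (1 - (1 - nu0) * t)) with (t * (nu - nu0)) by ring.
      rewrite Rabs_mult, Rabs_pos_eq by lra.
      pose proof (Rabs_pos (nu - nu0)). nra.
    - replace ((1 + t * (2 * nu - 1)) / 2 - (1 + t * (2 * nu0 - 1)) / 2) with (t * (nu - nu0)) by field.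
      rewrite Rabs_mult, Rabs_pos_eq by lra.
      pose proof (Rabs_pos (nu - nu0)). nra. }
  lra.
Qed.

Definition wK u nu := (1 - Rabs (2 * nu - 1)) * Kh u nu.

Lemma wK_ex u : uc u -> ex_RInt (wK u) 0 1.
Proof.
  intros U. apply (ex_RInt_continuous (V := R_CompleteNormedModule)). intros z _.
  apply continuity_pt_filterlim. unfold wK.
  apply continuity_pt_mult.
  - apply epsdel_cont. intros eps Heps. exists (eps / 2). split; [lra|].
    intros y Hy.
    split_Rabs; lra.
  - apply epsdel_cont. apply Kh_cont; auto.
Qed.

Lemma RInt_affine (A0 A1 : R) : RInt (fun x => (1 - x) * A0 + x * A1) 0 1 = (A0 + A1) / 2.
Proof.
  set (Fp := fun x => A0 * (x - x * x / 2) + A1 * (x * x / 2)).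
  assert (P : is_RInt (fun x => (1 - x) * A0 + x * A1) 0 1 (minus (Fp 1) (Fp 0))).
  { apply (is_RInt_derive (V := R_CompleteNormedModule)).
    - intros x _. unfold Fp. auto_derive; [exact I|]. field.
    - intros x _. apply (ex_derive_continuous (K := R_AbsRing) (V := R_NormedModule)). auto_derive. exact I. }
  rewrite (is_RInt_unique (V := R_CompleteNormedModule) _ _ _ _ P). unfold Fp, minus, plus, opp; simpl. field.
Qed.

Theorem corollary2p15 (J : R -> Prop) (f : R -> R) (a b : R) :
  is_interval J -> convex_on J f -> J a -> J b ->
  RInt (fun nu => f (nabla a nu b)) 0 1
  <= (f a + f b) / 2
     - RInt (fun nu => (1 - Rabs (2 * nu - 1)) *
          RInt (fun lam =>
             (f (nabla a (nu * lam) b) + f (nabla b ((1 - nu) * lam) a)) / 2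
             - f (nabla a ((1 + lam * (2 * nu - 1)) / 2) b)) 0 1) 0 1.
Proof.
  intros HI Hc Ha Hb.
  set (g := fun t => f (nabla a t b)).
  set (Ho := fun nu lam => (f (nabla a (nu * lam) b) + f (nabla b ((1 - nu) * lam) a)) / 2
             - f (nabla a ((1 + lam * (2 * nu - 1)) / 2) b)).
  set (O := fun nu => (1 - Rabs (2 * nu - 1)) * RInt (Ho nu) 0 1).
  change (RInt g 0 1 <= (f a + f b) / 2 - RInt O 0 1).
  assert (Hg : conv3 g) by (apply conv3_of_convex with J; auto).
  destruct (lim0 g Hg) as [c0 H0].
  destruct (lim0 (fun t => g (1 - t)) (conv3_flip g Hg)) as [c1 H1].
  assert (He : forall z, epsdel (ext g c0 c1) z) by (apply ext_epsdel; auto).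
  set (u := ext g c0 c1) in *.
  assert (Hu : uc u) by (apply ext_uc; auto).
  assert (Hflip : forall s, f (nabla b s a) = g (1 - s)).
  { intros s. unfold g, nabla. f_equal. ring. }
  assert (HoHh : forall nu l, 0 < nu < 1 -> 0 < l < 1 -> Ho nu l = Hh u nu l).
  { intros nu l Hn Hl. unfold Ho, Hh, u. rewrite Hflip.
    rewrite (ext_mid g c0 c1 (nu * l)) by nra.
    rewrite (ext_mid g c0 c1 (1 - (1 - nu) * l)) by nra.
    rewrite (ext_mid g c0 c1 ((1 + l * (2 * nu - 1)) / 2)) by nra.
    reflexivity. }
  assert (HoEx : forall nu, 0 < nu < 1 -> ex_RInt (Ho nu) 0 1).
  { intros nu Hn. apply (ex_RInt_ext (Hh u nu)).
    - rewrite Rmin_left, Rmax_right by lra. intros x Hx. symmetry. apply HoHh; auto.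
    - apply Hh_ex; auto. }
  assert (Hgex : ex_RInt g 0 1).
  { apply (ex_RInt_ext u).
    - rewrite Rmin_left, Rmax_right by lra. intros x Hx. unfold u. apply ext_mid; auto.
    - apply (ex_RInt_continuous (V := R_CompleteNormedModule)). intros z _.
      apply continuity_pt_filterlim. apply epsdel_cont. apply He. }
  assert (HOex : ex_RInt O 0 1).
  { apply (ex_RInt_ext (wK u)).
    - rewrite Rmin_left, Rmax_right by lra. intros x Hx. unfold O, wK, Kh.
      f_equal. apply RInt_ext. rewrite Rmin_left, Rmax_right by lra.
      intros y Hy. symmetry. apply HoHh; auto.
    - apply wK_ex; auto. }
  assert (Hpt : forall nu, 0 < nu < 1 -> g nu + O nu <= (1 - nu) * g 0 + nu * g 1).
  { intros nu Hn. unfold O.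
    set (w := 1 - Rabs (2 * nu - 1)).
    assert (E1 : w * RInt (Ho nu) 0 1 = RInt (fun l => w * Ho nu l) 0 1).
    { symmetry. apply (RInt_scal (V := R_CompleteNormedModule)). apply HoEx; auto. }
    rewrite E1.
    assert (Le : RInt (fun l => w * Ho nu l) 0 1
                 <= RInt (fun _ => (1 - nu) * g 0 + nu * g 1 - g nu) 0 1).
    { apply RInt_le; [lra| |apply ex_RInt_const|].
      - apply (ex_RInt_scal (V := R_NormedModule)). apply HoEx; auto.
      - intros l Hl. pose proof (pointwise g nu l Hg ltac:(lra) ltac:(lra)) as P.
        unfold Ho. rewrite Hflip. fold w in P. change (f (nabla a (nu * l) b)) with (g (nu * l)). change (f (nabla a ((1 + l * (2 * nu - 1)) / 2) b)) with (g ((1 + l * (2 * nu - 1)) / 2)). lra. }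
    rewrite RInt_const in Le. unfold scal in Le; simpl in Le. unfold mult in Le; simpl in Le.
    lra. }
  assert (Main : RInt (fun nu => g nu + O nu) 0 1
                 <= RInt (fun nu => (1 - nu) * g 0 + nu * g 1) 0 1).
  { apply RInt_le; [lra| | |].
    - apply (ex_RInt_plus (V := R_NormedModule)); auto.
    - apply (ex_RInt_continuous (V := R_CompleteNormedModule)). intros z _.
      apply (ex_derive_continuous (K := R_AbsRing) (V := R_NormedModule)). auto_derive. exact I.
    - exact Hpt. }
  rewrite RInt_affine in Main.
  assert (E2 : RInt (fun nu => g nu + O nu) 0 1 = RInt g 0 1 + RInt O 0 1).
  { apply (RInt_plus (V := R_CompleteNormedModule)); auto. }
  rewrite E2 in Main.
  assert (Ega : g 0 = f a) by (unfold g, nabla; f_equal; ring).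
  assert (Egb : g 1 = f b) by (unfold g, nabla; f_equal; ring).
  rewrite Ega, Egb in Main. lra.
Qed.
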